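(* Let $m\le n$. Then every instance with $n$ agents with monotone valuations and $m$ goods has at least $\frac{n!}{(n-m)!}$ EFX allocations, and there exists an instance with $n$ agents with additive valuations and $m$ goods that has exactly $\frac{n!}{(n-m)!}$ EFX allocations. *)

(* Defs.v *)
From mathcomp Require Import all_boot all_order all_algebra.
Set Implicit Arguments. Unset Strict Implicit. Unset Printing Implicit Defensive.
Import Order.TTheory GRing.Theory Num.Theory.
Local Open Scope ring_scope.

Definition valuations (R : realFieldType) (n m : nat) :=
  'I_n -> {set 'I_m} -> R.

Definition monotone_vals (R : realFieldType) (n m : nat) (v : valuations R n m) :=
  forall (i : 'I_n) (S T : {set 'I_m}), S \subset T -> v i S <= v i T.

Definition additive_vals (R : realFieldType) (n m : nat) (v : valuations R n m) :=
  exists w : 'I_n -> 'I_m -> R,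
    (forall i g, 0 <= w i g) /\
    (forall i (S : {set 'I_m}), v i S = \sum_(g in S) w i g).

(* A (complete) allocation assigns every good to exactly one agent. *)
Definition allocation (n m : nat) := {ffun 'I_m -> 'I_n}.

Definition bundle (n m : nat) (A : allocation n m) (i : 'I_n) : {set 'I_m} :=
  [set g | A g == i].

Definition EFX (R : realFieldType) (n m : nat) (v : valuations R n m)
  (A : allocation n m) : bool :=
  [forall i : 'I_n, forall j : 'I_n, forall g : 'I_m,
     (g \in bundle A j) ==> (v i (bundle A j :\ g) <= v i (bundle A i))].

Definition num_EFX (R : realFieldType) (n m : nat) (v : valuations R n m) : nat :=
  #|[set A : allocation n m | EFX v A]|.

(* Main.v *)
Require Import Defs.
From mathcomp Require Import all_boot all_order all_algebra.
Import Order.TTheory GRing.Theory Num.Theory.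
Local Open Scope ring_scope.

Lemma inj_EFX (R : realFieldType) (n m : nat) (v : valuations R n m)
  (A : allocation n m) : monotone_vals v -> injectiveb A -> EFX v A.
Proof.
move=> mon /injectiveP inj.
apply/forallP=> i; apply/forallP=> j; apply/forallP=> g; apply/implyP=> gj.
have -> : bundle A j :\ g = set0.
  apply/setP=> x; rewrite !inE; apply/negbTE; apply/negP=> /andP[xg].
  rewrite inE in gj; move/eqP=> Ax; move: xg; rewrite (inj x g) ?eqxx //.
  by rewrite Ax (eqP gj).
by apply: mon; apply: sub0set.
Qed.

Lemma noninj_empty (n m : nat) (A : allocation n m) :
  (m <= n)%N -> ~~ injectiveb A -> exists i : 'I_n, bundle A i = set0.
Proof.
move=> mn ninj.
have lt : (#|codom A| < m)%N.
  have := leq_image_card A 'I_m; rewrite card_ord leq_eqVlt => /orP[|//].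
  move=> e; exfalso; move/negP: ninj; apply; apply/injectiveP=> x y.
  have := @image_injP _ _ A 'I_m; rewrite card_ord e => /(_ isT) H.
  by apply: H.
have [i ni] : exists i : 'I_n, i \notin codom A.
  apply/existsP; rewrite -negb_forall; apply/negP=> /forallP all.
  have : ('I_n \subset codom A) by apply/subsetP=> x _; apply: all.
  move/subset_leq_card; rewrite card_ord => H.
  by move: (leq_trans (leq_trans lt mn) H); rewrite ltnn.
exists i; apply/setP=> g; rewrite !inE; apply/negbTE/negP=> /eqP Ag.
by move/negP: ni; apply; apply/codomP; exists g.
Qed.

Theorem proposition3 (R : realFieldType) (n m : nat) :
  (m <= n)%N ->
  (forall v : valuations R n m, monotone_vals v ->
     (n`! %/ (n - m)`! <= num_EFX v)%N) /\
  (exists v : valuations R n m, additive_vals v /\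
     num_EFX v = (n`! %/ (n - m)`!)%N).
Proof.
move=> mn.
have cardI : #|[set A : allocation n m | injectiveb A]| = (n`! %/ (n - m)`!)%N.
  by rewrite card_inj_ffuns !card_ord ffact_factd.
split.
  move=> v mon; rewrite -cardI /num_EFX; apply: subset_leq_card.
  by apply/subsetP=> A; rewrite !inE; apply: inj_EFX.
exists (fun (_ : 'I_n) (S : {set 'I_m}) => (#|S|)%:R : R); split.
  exists (fun _ _ => 1); split => [//|i S]; by rewrite sumr_const.
rewrite /num_EFX -cardI; apply: eq_card => A; rewrite !inE.
apply/idP/idP; last first.
  by apply: inj_EFX => i S T /subset_leq_card; rewrite ler_nat.
apply: contraLR => ninj.
have [i Ei] := @noninj_empty n m A mn ninj.
have [x [y xy Axy]] := injectivePn _ ninj.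
apply/forallP => H; move: (H i) => /forallP /(_ (A x)) /forallP /(_ x).
rewrite inE eqxx /= Ei cards0 ler_nat leqn0 => /eqP /cards0_eq /setP /(_ y).
by rewrite !inE eq_sym xy Axy eqxx.
Qed.
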